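(* Let $D$ be a pipe dream and $i\ge1$ a row index with $\mathcal J_i(D)\neq\emptyset$, and let $j_{\min}=\min\mathcal J_i(D)$. Then $\delta(D)=\delta\big(D\setminus\{(i,j_{\min})\}\big)\star s_i$.
   Context: Permutations: $S_\infty=\bigcup_n S_n$ is generated by the simple transpositions $s_a=(a\ a{+}1)$, $a\ge 1$; $l(w)$ is the Coxeter length of $w$. A pipe dream is a finite subset $D\subset\mathbb{Z}_{>0}\times\mathbb{Z}_{>0}$; its elements $(r,c)$ are called crosses (in row $r$, column $c$). The reading word of $D$ is obtained by listing the crosses row by row from top to bottom, within each row from right to left (decreasing $c$), and recording for each cross $(r,c)$ its antidiagonal index $r+c-1$; this gives a word $(a_1,\dots,a_k)$. For $u\in S_\infty$ put $u\star s_a=us_a$ if $l(us_a)=l(u)+1$ and $u\star s_a=u$ otherwise. The Demazure product of $D$ is $\delta(D)=(\cdots((e\star s_{a_1})\star s_{a_2})\cdots)\star s_{a_k}$. For a pipe dream $D$ and row index $i$: $\mathrm{start}_i(D)=\min\{c\ge1:(i,c)\notin D\}$ and $\mathcal J_i(D)=\{c<\mathrm{start}_i(D):(i+1,c)\notin D\}$. *)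

(* Defs.v *)
From mathcomp Require Import all_boot.
Set Implicit Arguments. Unset Strict Implicit. Unset Printing Implicit Defensive.

(* ---------- Permutations of S_infty ----------
   An element of S_infty is represented by its one-line notation on an
   initial segment {1,...,n}: a list [w(1); ...; w(n)] which is a permutation
   of 1..n; w fixes every x > n.  Two lists represent the same permutation
   iff [papp] agrees on them (trailing fixed points may differ). *)
Definition perm_inf := seq nat.

Definition papp (w : perm_inf) (x : nat) : nat :=
  if (0 < x) && (x <= size w) then nth 0 w x.-1 else x.

Definition peq (u v : perm_inf) : Prop := forall x, 0 < x -> papp u x = papp v x.

Definition sfun (a x : nat) : nat :=
  if x == a then a.+1 else if x == a.+1 then a else x.

Definition pad (n : nat) (w : perm_inf) : perm_inf :=
  w ++ iota (size w).+1 (n - size w).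

Definition rmul_s (u : perm_inf) (a : nat) : perm_inf :=
  let u' := pad a.+1 u in [seq papp u' (sfun a x) | x <- iota 1 (size u')].

Definition plength (w : perm_inf) : nat :=
  size [seq pq <- allpairs pair (iota 0 (size w)) (iota 0 (size w))
         | (pq.1 < pq.2) && (nth 0 w pq.2 < nth 0 w pq.1)].

Definition dstar (u : perm_inf) (a : nat) : perm_inf :=
  if plength (rmul_s u a) == (plength u).+1 then rmul_s u a else u.

(* ---------- Pipe dreams ----------
   A pipe dream is a finite set of crosses (r,c), r,c >= 1, given as a list
   (duplicates are irrelevant). *)
Definition pipe_dream := seq (nat * nat).

Definition is_pipe_dream (D : pipe_dream) : bool :=
  all (fun p => (0 < p.1) && (0 < p.2)) D.

Definition read_le (p q : nat * nat) : bool :=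
  (p.1 < q.1) || ((p.1 == q.1) && (q.2 <= p.2)).

Definition reading_word (D : pipe_dream) : seq nat :=
  [seq (p.1 + p.2).-1 | p <- sort read_le (undup D)].

Definition demazure (D : pipe_dream) : perm_inf :=
  foldl dstar [::] (reading_word D).

(* start_i(D) = min { c >= 1 : (i,c) \notin D } ; the minimum is attained
   among 1..size D + 1 *)
Definition start (i : nat) (D : pipe_dream) : nat :=
  (find (fun c => (i, c) \notin D) (iota 1 (size D).+1)).+1.

Definition Jset (i : nat) (D : pipe_dream) : seq nat :=
  [seq c <- iota 1 (start i D).-1 | (i.+1, c) \notin D].

Definition remove_cross (D : pipe_dream) (p : nat * nat) : pipe_dream :=
  [seq q <- D | q != p].

(* Main.v *)
Require Import Defs.
From mathcomp Require Import all_boot zify.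
Set Implicit Arguments. Unset Strict Implicit.

Lemma sfun_spec a x : (x = a /\ sfun a x = a.+1) \/ (x = a.+1 /\ sfun a x = a) \/ (x <> a /\ x <> a.+1 /\ sfun a x = x).
Proof. rewrite /sfun; case: eqP => ?; [left; split=>//|]; case: eqP => ?; [right;left; split=>//|]; by right;right. Qed.
Lemma sfunC a b x : (a.+1 < b) || (b.+1 < a) -> sfun a (sfun b x) = sfun b (sfun a x).
Proof.
move=> h; have := sfun_spec b x; have := sfun_spec a x; have := sfun_spec a (sfun b x); have := sfun_spec b (sfun a x); lia.
Qed.
Lemma sfunK a x : sfun a (sfun a x) = x.
Proof. have := sfun_spec a x; have := sfun_spec a (sfun a x); lia. Qed.

Definition Hs (f : nat -> nat) (a : nat) : nat -> nat :=
  if f a < f a.+1 then (fun x => f (sfun a x)) else f.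

Definition eqf (f g : nat -> nat) := forall x, f x = g x.

Lemma braid f a x : Hs (Hs (Hs f a) a.+1) a x = Hs (Hs (Hs f a.+1) a) a.+1 x.
Proof.
have s1 : sfun a a = a.+1 by rewrite /sfun eqxx.
have s2 : sfun a a.+1 = a by rewrite /sfun; case: eqP; [lia|]; rewrite eqxx.
have s3 : sfun a a.+2 = a.+2 by rewrite /sfun; case: eqP; [lia|]; case: eqP; lia.
have s4 : sfun a.+1 a = a by rewrite /sfun; case: eqP; [lia|]; case: eqP; lia.
have s5 : sfun a.+1 a.+1 = a.+2 by rewrite /sfun eqxx.
have s6 : sfun a.+1 a.+2 = a.+1 by rewrite /sfun; case: eqP; [lia|]; rewrite eqxx.
rewrite /Hs.
case E1: (f a < f a.+1); case E2: (f a.+1 < f a.+2); case E3: (f a < f a.+2);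
case E4: (f a.+1 < f a); case E5: (f a.+2 < f a.+1); case E6: (f a.+2 < f a);
 rewrite /= ?s1 ?s2 ?s3 ?s4 ?s5 ?s6 ?E1 ?E2 ?E3 ?E4 ?E5 ?E6 /= ?s1 ?s2 ?s3 ?s4 ?s5 ?s6 ?E1 ?E2 ?E3 ?E4 ?E5 ?E6 /=
 ?s1 ?s2 ?s3 ?s4 ?s5 ?s6 ?E1 ?E2 ?E3 ?E4 ?E5 ?E6 /=; try lia.
all: case: (eqVneq x a) => [->|xa]; rewrite ?s1 ?s2 ?s3 ?s4 ?s5 ?s6 ?s1 ?s2 ?s3 ?s4 ?s5 ?s6; try lia;
  case: (eqVneq x a.+1) => [->|xa1]; rewrite ?s1 ?s2 ?s3 ?s4 ?s5 ?s6 ?s1 ?s2 ?s3 ?s4 ?s5 ?s6; try lia;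
  case: (eqVneq x a.+2) => [->|xa2]; rewrite ?s1 ?s2 ?s3 ?s4 ?s5 ?s6 ?s1 ?s2 ?s3 ?s4 ?s5 ?s6; try lia;
  have t1 : sfun a x = x by rewrite /sfun (negPf xa) (negPf xa1).
all: have t2 : sfun a.+1 x = x by rewrite /sfun (negPf xa1) (negPf xa2).
all: by rewrite ?t1 ?t2 ?t1 ?t2.
Qed.

Lemma Hs_ext f g a : eqf f g -> eqf (Hs f a) (Hs g a).
Proof. by move=> e x; rewrite /Hs !e; case: ifP => _; rewrite e. Qed.

Definition far a b := (a.+1 < b) || (b.+1 < a).

Lemma Hs_comm f a b : far a b -> eqf (Hs (Hs f a) b) (Hs (Hs f b) a).
Proof.
move=> h x.
have e1 : sfun a b = b by have := sfun_spec a b; move: h; rewrite /far; lia.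
have e2 : sfun a b.+1 = b.+1 by have := sfun_spec a b.+1; move: h; rewrite /far; lia.
have e3 : sfun b a = a by have := sfun_spec b a; move: h; rewrite /far; lia.
have e4 : sfun b a.+1 = a.+1 by have := sfun_spec b a.+1; move: h; rewrite /far; lia.
rewrite /Hs; case E1: (f a < f a.+1); case E2: (f b < f b.+1);
  rewrite /= ?e1 ?e2 ?e3 ?e4 ?E1 ?E2 //= ?e1 ?e2 ?e3 ?e4 ?E1 ?E2 //.
by rewrite sfunC.
Qed.

Definition weq (w1 w2 : seq nat) := forall g, eqf (foldl Hs g w1) (foldl Hs g w2).

Lemma F_ext f g w : eqf f g -> eqf (foldl Hs f w) (foldl Hs g w).
Proof. elim: w f g => //= a w IH f g e; apply: IH; exact: Hs_ext. Qed.

Lemma weq_refl w : weq w w. Proof. by move=> g x. Qed.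
Lemma weq_sym w1 w2 : weq w1 w2 -> weq w2 w1. Proof. by move=> h g x; rewrite h. Qed.
Lemma weq_trans w1 w2 w3 : weq w1 w2 -> weq w2 w3 -> weq w1 w3.
Proof. by move=> h1 h2 g x; rewrite h1 h2. Qed.
Lemma weq_cat u1 u2 v1 v2 : weq u1 u2 -> weq v1 v2 -> weq (u1 ++ v1) (u2 ++ v2).
Proof.
move=> hu hv g x; rewrite !foldl_cat hv; apply: F_ext; exact: hu.
Qed.

Lemma comm_word a w g : all (far a) w -> eqf (foldl Hs (Hs g a) w) (Hs (foldl Hs g w) a).
Proof.
elim: w g => [|b w IH] g /=; first by move=> _ x.
case/andP=> hab hw x.
rewrite (F_ext w (Hs_comm g hab)) IH //.
Qed.

Lemma comm_words w1 w2 : all (fun a => all (far a) w2) w1 -> weq (w1 ++ w2) (w2 ++ w1).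
Proof.
elim: w1 => [|a w1 IH] /=; first by move=> _ g x; rewrite cats0.
case/andP=> ha hw g x /=.
rewrite IH // foldl_cat /= foldl_cat.
apply: F_ext => y; by rewrite comm_word.
Qed.

Lemma braid_w a : weq [:: a; a.+1; a] [:: a.+1; a; a.+1].
Proof. move=> g x /=; exact: braid. Qed.

Lemma braid_word i m : weq ((i + m) :: rev (iota i m) ++ rev (iota i.+1 m))
                           (rev (iota i m) ++ rev (iota i.+1 m) ++ [:: i]).
Proof.
elim: m => [|m IH].
  by move=> g x; rewrite addn0.
have E1 : rev (iota i m.+1) = (i + m) :: rev (iota i m) by rewrite -[m.+1]addn1 iotaD rev_cat.
have E2 : rev (iota i.+1 m.+1) = (i + m).+1 :: rev (iota i.+1 m) by rewrite -[m.+1]addn1 iotaD rev_cat addSn.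
rewrite E1 E2 addnS.
set c := rev (iota i m); set d := rev (iota i.+1 m).
have hc : all (far (i + m).+1) c.
  apply/allP => y; rewrite mem_rev mem_iota /far => /andP [h1 h2]; lia.
have hc' : all (fun a => all (far a) [:: (i+m).+1]) c.
  apply/allP => y; rewrite mem_rev mem_iota /far => /andP [h1 h2] /=; lia.
apply: (@weq_trans _ ([:: (i+m).+1; i+m; (i+m).+1] ++ c ++ d)).
  have -> : (i + m).+1 :: (i + m :: c) ++ (i + m).+1 :: d = [:: (i+m).+1; i+m] ++ (c ++ [:: (i+m).+1]) ++ d by rewrite -catA.
  have -> : [:: (i+m).+1; i+m; (i+m).+1] ++ c ++ d = [:: (i+m).+1; i+m] ++ ([:: (i+m).+1] ++ c) ++ d by [].
  apply: weq_cat; first exact: weq_refl.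
  apply: weq_cat; last exact: weq_refl.
  exact: comm_words.
apply: (@weq_trans _ ([:: i+m; (i+m).+1; i+m] ++ c ++ d)).
  apply: weq_cat; last exact: weq_refl.
  exact/weq_sym/braid_w.
apply: (@weq_trans _ ([:: i+m; (i+m).+1] ++ c ++ d ++ [:: i])).
  rewrite -[[:: i+m; (i+m).+1; i+m] ++ c ++ d]/([:: i+m; (i+m).+1] ++ ((i+m) :: c ++ d)).
  apply: weq_cat; first exact: weq_refl.
  exact: IH.
have -> : [:: i+m; (i+m).+1] ++ c ++ d ++ [:: i] = [:: i+m] ++ ([:: (i+m).+1] ++ c) ++ (d ++ [:: i]) by [].
have -> : (i + m :: c) ++ ((i + m).+1 :: d) ++ [:: i] = [:: i+m] ++ (c ++ [:: (i+m).+1]) ++ (d ++ [:: i]) by rewrite /= -catA.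
apply: weq_cat; first exact: weq_refl.
apply: weq_cat; last exact: weq_refl.
exact/weq_sym/comm_words.
Qed.

Lemma move_word i m Q B : all (fun b => i + m + 2 <= b) Q -> all (fun b => i.+2 <= b) B ->
  weq ((i+m) :: rev (iota i m) ++ Q ++ rev (iota i.+1 m) ++ B)
      (rev (iota i m) ++ Q ++ rev (iota i.+1 m) ++ B ++ [:: i]).
Proof.
move=> hQ hB.
set c := rev (iota i m); set d := rev (iota i.+1 m).
have hcQ : all (fun a => all (far a) Q) ((i+m) :: c).
  apply/allP => y hy; apply/allP => z hz.
  move: hy; rewrite inE mem_rev mem_iota => hy.
  move/allP: hQ => /(_ z hz); rewrite /far; lia.
have hiB : all (fun a => all (far a) B) [:: i].
  rewrite /= andbT; apply/allP => z hz; move/allP: hB => /(_ z hz); rewrite /far; lia.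
apply: (@weq_trans _ (Q ++ ((i + m) :: c ++ d) ++ B)).
  have -> : (i + m) :: c ++ Q ++ d ++ B = (((i+m) :: c) ++ Q) ++ d ++ B by rewrite cat_cons catA.
  have -> : Q ++ ((i + m) :: c ++ d) ++ B = (Q ++ ((i+m) :: c)) ++ d ++ B by rewrite -!catA /= -!catA.
  apply: weq_cat; [exact: comm_words | exact: weq_refl].
apply: (@weq_trans _ (Q ++ (c ++ d ++ [:: i]) ++ B)).
  apply: weq_cat; first exact: weq_refl.
  apply: weq_cat; [exact: braid_word | exact: weq_refl].
apply: (@weq_trans _ (Q ++ c ++ d ++ B ++ [:: i])).
  have -> : Q ++ (c ++ d ++ [:: i]) ++ B = (Q ++ c ++ d) ++ ([:: i] ++ B) by rewrite -!catA.
  have -> : Q ++ c ++ d ++ B ++ [:: i] = (Q ++ c ++ d) ++ (B ++ [:: i]) by rewrite -!catA.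
  apply: weq_cat; [exact: weq_refl | exact: comm_words].
have -> : Q ++ c ++ d ++ B ++ [:: i] = (Q ++ c) ++ (d ++ B ++ [:: i]) by rewrite -!catA.
have -> : c ++ Q ++ d ++ B ++ [:: i] = (c ++ Q) ++ (d ++ B ++ [:: i]) by rewrite -!catA.
apply: weq_cat; last exact: weq_refl.
apply: weq_sym; apply: comm_words.
apply/allP => y hy; apply/allP => z hz.
move: hy; rewrite mem_rev mem_iota => hy.
move/allP: hQ => /(_ z hz); rewrite /far; lia.
Qed.


Definition G (w : seq nat) (x y : nat) : nat := (x < y) && (nth 0 w y < nth 0 w x).

Lemma plength_sum w : plength w = \sum_(x <- iota 0 (size w)) \sum_(y <- iota 0 (size w)) G w x y.
Proof.
rewrite /plength size_filter -sum1_count big_mkcond /= big_allpairs.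
apply: eq_bigr => x _; apply: eq_bigr => y _ /=.
by rewrite /G; case: ifP.
Qed.

Lemma sum_delta (s : seq nat) k (b : nat -> bool) : uniq s -> k \in s ->
  \sum_(y <- s) ((y == k) && b y : nat) = b k.
Proof.
move=> us ks; rewrite (bigD1_seq k) //= eqxx /= big1 ?addn0 // => y /negPf ->; by [].
Qed.

Definition swapl (w : seq nat) p := [seq nth 0 w (sfun p k) | k <- iota 0 (size w)].

Lemma size_swapl w p : size (swapl w p) = size w.
Proof. by rewrite size_map size_iota. Qed.

Lemma nth_swapl w p k : k < size w -> nth 0 (swapl w p) k = nth 0 w (sfun p k).
Proof. by move=> hk; rewrite (nth_map 0) ?size_iota // nth_iota. Qed.

Lemma sum_reindex n p (F : nat -> nat) : p.+1 < n ->
  \sum_(x <- iota 0 n) F x = \sum_(x <- iota 0 n) F (sfun p x).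
Proof.
move=> hp.
rewrite -(big_map (sfun p) predT F); apply: perm_big.
apply: uniq_perm; first by rewrite iota_uniq.
- rewrite map_inj_in_uniq; first by rewrite iota_uniq.
  by move=> x y _ _ /(congr1 (sfun p)); rewrite !sfunK.
move=> x; rewrite mem_iota; apply/idP/mapP.
  move=> hx; exists (sfun p x); last by rewrite sfunK.
  rewrite mem_iota; have := sfun_spec p x; lia.
case=> y; rewrite mem_iota => hy ->; have := sfun_spec p y; lia.
Qed.

Lemma plength_swap w p : p.+1 < size w ->
  plength (swapl w p) + (nth 0 w p.+1 < nth 0 w p) = plength w + (nth 0 w p < nth 0 w p.+1).
Proof.
move=> hp; rewrite !plength_sum size_swapl.
have ins : forall x, x \in iota 0 (size w) -> x < size w by move=> x; rewrite mem_iota.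
have -> : \sum_(x <- iota 0 (size w)) \sum_(y <- iota 0 (size w)) G (swapl w p) x y =
          \sum_(x <- iota 0 (size w)) \sum_(y <- iota 0 (size w)) ((sfun p x < sfun p y) && (nth 0 w y < nth 0 w x) : nat).
  rewrite (sum_reindex _ hp); apply: eq_big_seq => x hx.
  rewrite (sum_reindex _ hp); apply: eq_big_seq => y hy.
  rewrite /G !nth_swapl ?sfunK //.
  + have := ins _ hx; have := sfun_spec p x; lia.
  + have := ins _ hy; have := sfun_spec p y; lia.
have E1 : \sum_(x <- iota 0 (size w)) \sum_(y <- iota 0 (size w)) ((x == p) && ((y == p.+1) && (nth 0 w y < nth 0 w x)) : nat)
          = (nth 0 w p.+1 < nth 0 w p).
  rewrite (eq_bigr (fun x => (x == p) && (nth 0 w p.+1 < nth 0 w x) : nat)).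
    rewrite sum_delta ?iota_uniq // mem_iota; lia.
  move=> x _; case: (x == p) => /=.
    by rewrite sum_delta ?iota_uniq // mem_iota; lia.
  by rewrite big1.
have E2 : \sum_(x <- iota 0 (size w)) \sum_(y <- iota 0 (size w)) ((x == p.+1) && ((y == p) && (nth 0 w y < nth 0 w x)) : nat)
          = (nth 0 w p < nth 0 w p.+1).
  rewrite (eq_bigr (fun x => (x == p.+1) && (nth 0 w p < nth 0 w x) : nat)).
    rewrite sum_delta ?iota_uniq // mem_iota; lia.
  move=> x _; case: (x == p.+1) => /=.
    by rewrite sum_delta ?iota_uniq // mem_iota; lia.
  by rewrite big1.
rewrite -E1 -E2 -!big_split /=; apply: eq_bigr => x _; rewrite -!big_split /=.
apply: eq_bigr => y _; rewrite /G.
case: (nth 0 w y < nth 0 w x); rewrite ?andbT ?andbF //=.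
have := sfun_spec p x; have := sfun_spec p y; lia.
Qed.

Definition Inv (u : seq nat) := all (fun v => v <= size u) u.

Lemma size_pad n u : size (pad n u) = size u + (n - size u).
Proof. by rewrite /pad size_cat size_iota. Qed.

Lemma plength_pad n u : Inv u -> plength (pad n u) = plength u.
Proof.
move=> hu; rewrite !plength_sum size_pad iotaD add0n !big_cat /=.
set t := pad n u.
have nthA : forall x, x < size u -> nth 0 t x = nth 0 u x.
  by move=> x hx; rewrite /t /pad nth_cat hx.
have nthB : forall y, size u <= y < size u + (n - size u) -> nth 0 t y = (size u).+1 + (y - size u).
  move=> y /andP[h1 h2]; rewrite /t /pad nth_cat ltnNge h1 /= nth_iota //; lia.
have bnd : forall x, x < size u -> nth 0 u x <= size u.
  by move=> x hx; exact: (allP hu) _ (mem_nth 0 hx).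
rewrite [X in _ + X]big1_seq ?addn0; last first.
  move=> x /andP[_]; rewrite mem_iota => hx.
  apply: big1_seq => y /andP[_]; rewrite mem_cat !mem_iota => hy.
  rewrite /G; case: (ltnP y (size u)) => hy'; first lia.
  rewrite !nthB //; lia.
apply: eq_big_seq => x; rewrite mem_iota => hx.
rewrite big_cat /= [X in _ + X]big1_seq ?addn0; last first.
  move=> y /andP[_]; rewrite mem_iota => hy.
  rewrite /G nthB ?nthA //; have := bnd x; lia.
apply: eq_big_seq => y; rewrite mem_iota => hy.
by rewrite /G !nthA //; lia.
Qed.

Lemma papp_pad n u x : papp (pad n u) x = papp u x.
Proof.
rewrite /papp size_pad.
case: (posnP x) => [->|xp] //=.
case: (leqP x (size u)) => h1.
  by rewrite /pad nth_cat ifT; [rewrite ifT //; lia | lia].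
case: leqP => h2 //.
rewrite /pad nth_cat ifF; last lia.
rewrite nth_iota; lia.
Qed.

Lemma papp_nth w x : 0 < x <= size w -> papp w x = nth 0 w x.-1.
Proof. by rewrite /papp => ->. Qed.

Lemma rmul_swap u a : 0 < a -> rmul_s u a = swapl (pad a.+1 u) a.-1.
Proof.
move=> ha; rewrite /rmul_s /swapl.
set u' := pad a.+1 u.
have sz : a < size u' by rewrite /u' size_pad; lia.
have -> : iota 1 (size u') = map (addn 1) (iota 0 (size u')) by rewrite -iotaDl.
rewrite -map_comp; apply/eq_in_map => k; rewrite mem_iota => hk /=.
have -> : sfun a (1 + k) = (sfun a.-1 k).+1 by have := sfun_spec a (1+k); have := sfun_spec a.-1 k; lia.
rewrite papp_nth //; apply/andP; split => //.
have := sfun_spec a.-1 k; lia.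
Qed.

Lemma dstar_key u a : 0 < a -> Inv u ->
  dstar u a = if papp u a < papp u a.+1 then rmul_s u a else u.
Proof.
move=> ha hu; rewrite /dstar rmul_swap //.
set u' := pad a.+1 u.
have sz : a.-1.+1 < size u' by rewrite /u' size_pad; lia.
have := plength_swap sz; have pk : a.-1.+1 = a by lia. rewrite pk.
have e1 : nth 0 u' a.-1 = papp u a by rewrite -(papp_pad a.+1) -/u' papp_nth //; lia.
have e2 : nth 0 u' a = papp u a.+1 by rewrite -(papp_pad a.+1) -/u' papp_nth //; lia.
rewrite e1 e2 /u' plength_pad //.
move=> H; case: (ltnP (papp u a) (papp u a.+1)) => h; case: eqP => //; lia.
Qed.

Lemma papp_rmul u a x : 0 < a -> papp (rmul_s u a) x = papp u (sfun a x).
Proof.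
move=> ha.
have szr : size (rmul_s u a) = size (pad a.+1 u) by rewrite /rmul_s size_map size_iota.
case: (posnP x) => [->|xp].
  have -> : sfun a 0 = 0 by have := sfun_spec a 0; lia.
  by [].
case: (leqP x (size (pad a.+1 u))) => hx.
  rewrite papp_nth ?szr ?xp //.
  rewrite /rmul_s (nth_map 0) ?size_iota; last lia.
  rewrite nth_iota; last lia.
  by rewrite add1n prednK // papp_pad.
rewrite /papp szr ifF; last lia.
move: hx; rewrite size_pad => hx.
have -> : sfun a x = x by have := sfun_spec a x; lia.
rewrite ifF //; lia.
Qed.

Lemma papp_le w y : Inv w -> y <= size w -> papp w y <= size w.
Proof.
move=> hw hy; rewrite /papp; case: ifP => // /andP[h1 h2].
apply: (allP hw); apply: mem_nth; move: h1 h2; case: y {hy} => //.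
Qed.

Lemma Inv_pad n u : Inv u -> Inv (pad n u).
Proof.
move=> hu; rewrite /Inv size_pad /pad all_cat; apply/andP; split.
  apply/allP => v hv; have := allP hu v hv; lia.
apply/allP => v; rewrite mem_iota; lia.
Qed.

Lemma Inv_dstar u a : 0 < a -> Inv u -> Inv (dstar u a).
Proof.
move=> ha hu; rewrite dstar_key //; case: ifP => // _.
have hu' := Inv_pad a.+1 hu.
have szr : size (rmul_s u a) = size (pad a.+1 u) by rewrite /rmul_s size_map size_iota.
rewrite /Inv szr; apply/allP => v /mapP [x]; rewrite mem_iota => hx ->.
apply: papp_le => //.
move: hx; have := sfun_spec a x; rewrite size_pad; lia.
Qed.


Lemma demazure_foldl w u f : all (fun a => 0 < a) w -> Inv u -> eqf (papp u) f ->
  eqf (papp (foldl dstar u w)) (foldl Hs f w).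
Proof.
elim: w u f => //= a w IH u f /andP[ha hw] hu e.
apply: IH => //; first exact: Inv_dstar.
move=> x; rewrite dstar_key // /Hs -!e; case: ifP => _ //.
by rewrite papp_rmul.
Qed.

Definition rlt (p q : nat * nat) : bool := (p.1 < q.1) || ((p.1 == q.1) && (q.2 < p.2)).

Lemma rl_total : total read_le.
Proof. move=> [a b] [c d]; rewrite /read_le /=; have [->|ne] := eqVneq a c; first by rewrite ltnn /= ?eqxx /= leq_total. lia. Qed.

Lemma rl_trans : transitive read_le.
Proof. move=> [a b] [c d] [e f]; rewrite /read_le /=; case: eqP; case: eqP; case: eqP => /=; lia. Qed.

Lemma rlt_trans : transitive rlt.
Proof. move=> [a b] [c d] [e f]; rewrite /rlt /=; case: eqP; case: eqP; case: eqP => /=; lia. Qed.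

Lemma rlt_irr : irreflexive rlt.
Proof. move=> [a b]; rewrite /rlt /= ltnn eqxx /=; lia. Qed.

Lemma path_strict x s : path read_le x s -> uniq (x :: s) -> path rlt x s.
Proof.
elim: s x => //= y s IH x /andP[hxy hp] /andP[hx /andP[hy hu]].
rewrite IH ?hp //= ?hy ?hu // andbT.
move: hx; rewrite inE negb_or => /andP[nxy _].
move: hxy nxy; clear; case: x => a b; case: y => c d; rewrite /read_le /rlt /= xpair_eqE.
case: eqP; case: eqP => /=; lia.
Qed.

Lemma sorted_strict s : sorted read_le s -> uniq s -> sorted rlt s.
Proof. case: s => //= x s; exact: path_strict. Qed.

Lemma mem_pairmap (k : nat) (s : seq nat) (q : nat * nat) :
  (q \in [seq (k, c) | c <- s]) = (q.1 == k) && (q.2 \in s).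
Proof.
case: q => r c /=; apply/mapP/andP => [[c' hc' [-> ->]]|[/eqP -> hc]]; first by [].
by exists c.
Qed.

Lemma map_rf_iota k s m : 0 < s ->
  [seq (k + c).-1 | c <- iota s m] = iota (k + s).-1 m.
Proof.
elim: m s => //= m IH s hs; rewrite IH //; congr (_ :: iota _ _); lia.
Qed.

Lemma papp_dstar u a : 0 < a -> Inv u -> eqf (papp (dstar u a)) (Hs (papp u) a).
Proof. move=> ha hu x; rewrite dstar_key // /Hs; case: ifP => _ //; by rewrite papp_rmul. Qed.

Lemma Inv_foldl w u : all (fun a => 0 < a) w -> Inv u -> Inv (foldl dstar u w).
Proof. elim: w u => //= a w IH u /andP[ha hw] hu; apply: IH => //; exact: Inv_dstar. Qed.

Lemma Inv_nil : Inv [::]. Proof. by []. Qed.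

Lemma pos_rw E : is_pipe_dream E -> all (fun a => 0 < a) (reading_word E).
Proof.
move=> hE; apply/allP => b /mapP [q]; rewrite mem_sort mem_undup => hq ->.
move/allP: hE => /(_ q hq) /andP[h1 h2]; lia.
Qed.

Lemma pairE (q : nat * nat) : exists r c : nat, q = (r, c).
Proof. by case: q => r c; exists r, c. Qed.

Unset Implicit Arguments.
Set Strict Implicit.

Theorem mainTheorem3 (D : pipe_dream) (i jmin : nat) :
  is_pipe_dream D -> 0 < i ->
  jmin \in Jset i D ->
  (forall j, j \in Jset i D -> jmin <= j) ->
  peq (demazure D) (dstar (demazure (remove_cross D (i, jmin))) i).
Proof.
move=> hD hi hj hmin.
have pipe : forall q, q \in D -> 0 < q.1 /\ 0 < q.2.
  by move=> q hq; move/allP: hD => /(_ q hq) /andP[].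
have hj' := hj.
move: hj'; rewrite /Jset mem_filter mem_iota => /andP[hnj /andP[hj1 hj2]].
have Fstart : forall c, 0 < c < start i D -> (i, c) \in D.
  move=> c /andP[c1 c2].
  have hc : c.-1 < find (fun c => (i,c) \notin D) (iota 1 (size D).+1) by move: c2; rewrite /start; lia.
  have hsz := find_size (fun c => (i,c) \notin D) (iota 1 (size D).+1).
  have := before_find 0 hc; rewrite nth_iota; last by rewrite size_iota in hsz; lia.
  rewrite add1n prednK //; by move/negbFE.
have jpos : 0 < jmin by lia.
have jst : jmin < start i D by lia.
have F1 : forall c, 0 < c < jmin -> (i, c) \in D by move=> c h; apply: Fstart; lia.
have F2 : forall c, 0 < c < jmin -> (i.+1, c) \in D.
  move=> c h; apply/negPn/negP => hn.
  have : c \in Jset i D by rewrite /Jset mem_filter mem_iota hn andTb; lia.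
  move/hmin; lia.
have [m hm] : exists m, jmin = m.+1 by exists jmin.-1; rewrite prednK.
set p0 := (i, jmin).
have p0D : p0 \in D by apply: Fstart; lia.
set L := sort read_le (undup D).
have uL : uniq L by rewrite sort_uniq undup_uniq.
have sL : sorted rlt L by apply: sorted_strict => //; exact: sort_sorted rl_total _.
have memL : forall q, (q \in L) = (q \in D) by move=> q; rewrite mem_sort mem_undup.
have p0L : p0 \in L by rewrite memL.
have eL' : sort read_le (undup (remove_cross D p0)) = [seq q <- L | q != p0].
  by rewrite /remove_cross -filter_undup (filter_sort rl_total rl_trans).
have [X [Y eXY]] : exists X Y, L = X ++ p0 :: Y.
  exists (take (index p0 L) L), (drop (index p0 L).+1 L).
  by rewrite -{1}(cat_take_drop (index p0 L) L) (drop_nth p0) ?index_mem // nth_index.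
rewrite eXY in uL sL.
have pw : pairwise rlt (X ++ p0 :: Y) by rewrite -sorted_pairwise //; exact: rlt_trans.
move: pw; rewrite pairwise_cat /= => /and3P [hXr _ /andP[hp0Y _]].
have nX : p0 \notin X.
  by apply/negP => h; have := allrelP hXr p0 p0 h (mem_head _ _); rewrite rlt_irr.
have nY : p0 \notin Y.
  by apply/negP => h; have := allP hp0Y p0 h; rewrite rlt_irr.
have eL'2 : [seq q <- L | q != p0] = X ++ Y.
  have aX : all (fun q => q != p0) X by apply/allP => q hq; apply/eqP => e; by rewrite -e hq in nX.
  have aY : all (fun q => q != p0) Y by apply/allP => q hq; apply/eqP => e; by rewrite -e hq in nY.
  by rewrite eXY filter_cat /= eqxx /= (all_filterP aX) (all_filterP aY).
have memY : forall q, (q \in Y) = (q \in D) && rlt p0 q.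
  move=> q; apply/idP/andP => [hq|[hqD hr]].
    split; [by rewrite -memL eXY mem_cat inE hq !orbT | exact: (allP hp0Y)].
  move: hqD; rewrite -memL eXY mem_cat inE => /orP[hqX|/orP[/eqP e|//]].
    have := allrelP hXr q p0 hqX (mem_head _ _); move: hr; rewrite /p0; clear.
    case: q => a b; rewrite /rlt /=; case: eqP; case: eqP => /=; lia.
  by rewrite e rlt_irr in hr.
set Yc := [seq (i, c) | c <- rev (iota 1 m)].
set YQ := sort read_le [seq q <- undup D | (q.1 == i.+1) && (jmin < q.2)].
set Yd := [seq (i.+1, c) | c <- rev (iota 1 m)].
set YB := sort read_le [seq q <- undup D | i.+1 < q.1].
have memYc : forall q : nat * nat, (q \in Yc) = (q.1 == i) && (0 < q.2 < jmin).
  by move=> q; rewrite mem_pairmap mem_rev mem_iota hm add1n.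
have memYd : forall q : nat * nat, (q \in Yd) = (q.1 == i.+1) && (0 < q.2 < jmin).
  by move=> q; rewrite mem_pairmap mem_rev mem_iota hm add1n.
have memYQ : forall q, (q \in YQ) = (q \in D) && ((q.1 == i.+1) && (jmin < q.2)).
  by move=> q; rewrite mem_sort mem_filter mem_undup andbC.
have memYB : forall q, (q \in YB) = (q \in D) && (i.+1 < q.1).
  by move=> q; rewrite mem_sort mem_filter mem_undup andbC.
have sYQ : sorted rlt YQ.
  apply: sorted_strict; first exact: sort_sorted rl_total _.
  by rewrite sort_uniq filter_uniq // undup_uniq.
have sYB : sorted rlt YB.
  apply: sorted_strict; first exact: sort_sorted rl_total _.
  by rewrite sort_uniq filter_uniq // undup_uniq.
have sYc : sorted rlt Yc.
  rewrite sorted_map rev_sorted; apply: sub_sorted (iota_ltn_sorted 1 m).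
  move=> a b /= h; rewrite /rlt /= eqxx ltnn /=; exact: h.
have sYd : sorted rlt Yd.
  rewrite sorted_map rev_sorted; apply: sub_sorted (iota_ltn_sorted 1 m).
  move=> a b /= h; rewrite /rlt /= eqxx ltnn /=; exact: h.
have eYZ : Y = Yc ++ YQ ++ Yd ++ YB.
  apply: (irr_sorted_eq rlt_trans rlt_irr).
  - by have [_ /path_sorted] := cat_sorted2 sL.
  - rewrite sorted_pairwise; last exact: rlt_trans.
    rewrite !pairwise_cat -!sorted_pairwise ?sYc ?sYQ ?sYd ?sYB; try exact: rlt_trans.
    have A1 : allrel rlt Yc (YQ ++ Yd ++ YB).
      apply/allrelP => a b; rewrite memYc !mem_cat memYQ memYd memYB.
      have [a1 [a2 ->]] := pairE a; have [b1 [b2 ->]] := pairE b => /= /andP[/eqP -> _].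
      rewrite /rlt /=; case/or3P => [/andP[_ /andP[/eqP -> _]]|/andP[/eqP -> _]|/andP[_ h]].
      * by rewrite ltnSn.
      * by rewrite ltnSn.
      * by rewrite (ltn_trans (ltnSn i) h).
    have A2 : allrel rlt YQ (Yd ++ YB).
      apply/allrelP => a b; rewrite memYQ mem_cat memYd memYB.
      have [a1 [a2 ->]] := pairE a; have [b1 [b2 ->]] := pairE b => /= /andP[_ /andP[/eqP -> h1]].
      rewrite /rlt /=; case/orP => [/andP[/eqP -> /andP[_ h2]]|/andP[_ h]].
      * rewrite ltnn eqxx /=; exact: (ltn_trans h2 h1).
      * by rewrite h.
    have A3 : allrel rlt Yd YB.
      apply/allrelP => a b; rewrite memYd memYB.
      have [a1 [a2 ->]] := pairE a; have [b1 [b2 ->]] := pairE b => /= /andP[/eqP -> _] /andP[_ h].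
      by rewrite /rlt /= h.
    by rewrite A1 A2 A3.
  - move=> q; rewrite memY !mem_cat memYc memYQ memYd memYB.
    have [r [c ->]] := pairE q => /=.
    have [cD|cD] := boolP ((r, c) \in D).
      have [r0 c0] := pipe _ cD.
      have ne : ~ (r = i.+1 /\ c = jmin) by case=> e1 e2; rewrite e1 e2 in cD; rewrite cD in hnj.
      rewrite /= /rlt /p0 /=.
      move: r0 c0 ne; clear -hm; move=> r0 c0 ne.
      rewrite /= in r0 c0; apply/idP/idP; lia.
    have h1 : ~~ ((r == i) && (0 < c < jmin)).
      by apply/negP => /andP[/eqP e h]; rewrite e F1 in cD.
    have h2 : ~~ ((r == i.+1) && (0 < c < jmin)).
      by apply/negP => /andP[/eqP e h]; rewrite e F2 in cD.
    by rewrite (negbTE h1) (negbTE h2).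
have eYc : [seq (p.1 + p.2).-1 | p <- Yc] = rev (iota i m).
  have -> : [seq (p.1 + p.2).-1 | p <- Yc] = rev [seq (i + c).-1 | c <- iota 1 m]
    by rewrite /Yc -map_comp map_rev.
  by rewrite map_rf_iota // addn1.
have eYd : [seq (p.1 + p.2).-1 | p <- Yd] = rev (iota i.+1 m).
  have -> : [seq (p.1 + p.2).-1 | p <- Yd] = rev [seq (i.+1 + c).-1 | c <- iota 1 m]
    by rewrite /Yd -map_comp map_rev.
  by rewrite map_rf_iota // addn1.
have hQ : all (fun b => i + m + 2 <= b) [seq (p.1 + p.2).-1 | p <- YQ].
  apply/allP => b /mapP [q hq ->]; move: hq; rewrite memYQ => /andP[_ /andP[/eqP h1 h2]].
  have [r [c e]] := pairE q; rewrite e /= in h1 h2 *.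
  move: h1 h2; clear -hm; lia.
have hB : all (fun b => i.+2 <= b) [seq (p.1 + p.2).-1 | p <- YB].
  apply/allP => b /mapP [q hq ->]; move: hq; rewrite memYB => /andP[hqD h1].
  have [_ h2] := pipe _ hqD.
  have [r [c e]] := pairE q; rewrite e /= in h1 h2 *.
  move: h1 h2; clear; lia.
have eRW : reading_word D = [seq (p.1 + p.2).-1 | p <- X] ++ (i + m) ::
    (rev (iota i m) ++ [seq (p.1 + p.2).-1 | p <- YQ] ++ rev (iota i.+1 m) ++ [seq (p.1 + p.2).-1 | p <- YB]).
  rewrite /reading_word -/L eXY map_cat /= eYZ !map_cat eYc eYd.
  by rewrite /p0 /= hm addnS.
have eRW' : reading_word (remove_cross D p0) = [seq (p.1 + p.2).-1 | p <- X] ++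
    (rev (iota i m) ++ [seq (p.1 + p.2).-1 | p <- YQ] ++ rev (iota i.+1 m) ++ [seq (p.1 + p.2).-1 | p <- YB]).
  by rewrite /reading_word eL' eL'2 map_cat eYZ !map_cat eYc eYd.
have hD' : is_pipe_dream (remove_cross D p0).
  by apply/allP => q; rewrite mem_filter => /andP[_ hq]; exact: (allP hD).
have posD := pos_rw hD.
have posD' := pos_rw hD'.
move=> x _.
rewrite /demazure (papp_dstar hi (Inv_foldl posD' Inv_nil)).
rewrite (demazure_foldl posD Inv_nil (f := papp [::]) (fun _ => erefl)).
rewrite (@Hs_ext _ _ i (demazure_foldl posD' Inv_nil (f := papp [::]) (fun _ => erefl))).
rewrite eRW eRW' !foldl_cat.
rewrite (move_word hQ hB).
by rewrite !foldl_cat.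
Qed.
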